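(* Let $n$ be a positive integer. There exists a natural number $f(n)$, depending only on $n$, such that every finite group $G$ with exactly $n$ irrational conjugacy classes has at most $f(n)$ irrational irreducible characters. In particular, there exists a natural number $k = f(n)$ such that $[\mathbb{Q}(\chi):\mathbb{Q}] \le k$ for all $\chi \in \mathrm{Irr}(G)$ and all such groups $G$.
   Context: For a finite group $G$, $\mathrm{Irr}(G)$ is the set of complex irreducible characters. A conjugacy class $K$ is irrational if $\chi(K) \notin \mathbb{Q}$ for some $\chi \in \mathrm{Irr}(G)$. For $\chi \in \mathrm{Irr}(G)$, $\mathbb{Q}(\chi)$ is the field generated over $\mathbb{Q}$ by the values of $\chi$; $\chi$ is irrational if $\mathbb{Q}(\chi) \neq \mathbb{Q}$. *)

(* Defs.v *)
From HB Require Import structures.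
From mathcomp Require Import all_boot all_order all_algebra all_fingroup all_solvable all_field all_character.
Set Implicit Arguments. Unset Strict Implicit. Unset Printing Implicit Defensive.
Import GRing.Theory Num.Theory.
Local Open Scope ring_scope.

Definition irrational_class (gT : finGroupType) (G : {group gT}) (K : {set gT}) : bool :=
  [exists i : Iirr G, 'chi[G]_i (repr K) \notin Crat].

Definition num_irrational_classes (gT : finGroupType) (G : {group gT}) : nat :=
  #|[set K in classes G | irrational_class G K]|.

(* Q(chi): the subfield of algC generated by the values of chi, i.e. the
   intersection of all subfields (divring-closed subsets) of algC that
   contain every value chi g. *)
Definition in_Qfield (gT : finGroupType) (G : {group gT}) (chi : 'CF(G)) (x : algC) : Prop :=
  forall S : {pred algC}, GRing.divring_closed S ->
    (forall g : gT, chi g \in S) -> x \in S.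

(* chi is irrational iff Q(chi) <> Q, i.e. some value of chi is not rational
   (Q(chi) = Q exactly when all generators chi g lie in Q). *)
Definition irrational_char (gT : finGroupType) (G : {group gT}) (chi : 'CF(G)) : bool :=
  [exists g in G, chi g \notin Crat].

Definition num_irrational_chars (gT : finGroupType) (G : {group gT}) : nat :=
  #|[set i : Iirr G | irrational_char 'chi[G]_i]|.

(* [Q(chi) : Q] <= k : Q(chi) has dimension at most k as a Q-vector space,
   i.e. any k+1 elements of Q(chi) are Q-linearly dependent. *)
Definition Qdegree_le (gT : finGroupType) (G : {group gT}) (chi : 'CF(G)) (k : nat) : Prop :=
  forall s : seq algC, size s = k.+1 -> (forall x, x \in s -> in_Qfield chi x) ->
    exists a : seq rat, [/\ size a = k.+1, has (fun q => q != 0) a &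
      \sum_(i < k.+1) ratr a`_i * s`_i = 0].

(* Main.v *)
Require Import Defs.
From HB Require Import structures.
From mathcomp Require Import all_boot all_order all_algebra all_fingroup all_solvable all_field all_character.
From Stdlib Require Import ClassicalEpsilon Classical.
Import GRing.Theory Num.Theory.
Local Open Scope ring_scope.

Definition pb (P : Prop) : bool := if excluded_middle_informative P then true else false.
Lemma pbP P : reflect P (pb P).
Proof. by rewrite /pb; case: excluded_middle_informative => h; constructor. Qed.

Section Gen.
Variables (gT : finGroupType) (G : {group gT}).

Definition gr (j : Iirr G) := repr (irr_class j).

Lemma gr_in j : gr j \in G.
Proof. by have /repr_classesP[] := irr_classP j. Qed.

Lemma cfun_gr (phi : 'CF(G)) x : x \in G -> phi x = phi (gr (class_Iirr G (x ^: G)%g)).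
Proof. by move=> Gx; rewrite /gr class_IirrK ?mem_classes // cfun_repr. Qed.

Lemma cf_eq_gr (phi psi : 'CF(G)) : (forall j, phi (gr j) = psi (gr j)) -> phi = psi.
Proof. by move=> h; apply/cfun_inP => x Gx; rewrite !(cfun_gr _ _ Gx). Qed.

Lemma gr_eq j1 j2 : (forall i, 'chi[G]_i (gr j1) = 'chi_i (gr j2)) -> j1 = j2.
Proof.
move=> h; have /class_eqP e: gr j1 \in (gr j2 ^: G)%g.
  by apply/eq_irr_mem_classP; [apply: gr_in | ].
apply: (can_inj (@irr_classK _ G)).
transitivity (gr j1 ^: G)%g; first by rewrite repr_irr_classK.
by rewrite e repr_irr_classK.
Qed.

Lemma KL (u : {rmorphism algC -> algC}) :
  exists k : nat, forall i x, x \in G -> u ('chi[G]_i x) = 'chi_i (x ^+ k)%g.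
Proof.
have [z prim_z] := C_prim_root_exists (cardG_gt0 G).
have /(prim_rootP prim_z)[k Dk] : (u z) ^+ #|G| = 1.
  by rewrite -rmorphXn (prim_expr_order prim_z) rmorph1.
exists k => i x Gx.
have uroot w : w ^+ #|G| = 1 -> u w = w ^+ k.
  by move=> /(prim_rootP prim_z)[m ->]; rewrite rmorphXn Dk -!exprM mulnC.
have sxG : <[x]>%g \subset G by rewrite cycle_subG.
have xk : (x ^+ k)%g \in <[x]>%g by rewrite mem_cycle.
rewrite -(cfResE _ sxG (cycle_id x)) -(cfResE _ sxG xk).
have [r ->] := char_sum_irr (cfRes_char <[x]> (irr_char i)).
rewrite !sum_cfunE rmorph_sum; apply: eq_bigr => j _.
have lin := irr_cyclic_lin j (cycle_cyclic x).
rewrite (lin_charX lin _ (cycle_id x)) uroot //.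
by rewrite -(lin_charX lin _ (cycle_id x)) (expg_cardG Gx) lin_char1.
Qed.

Definition tmap (k : nat) (j : Iirr G) : Iirr G := class_Iirr G ((gr j ^+ k) ^: G)%g.

Section K.
Variables (u : {rmorphism algC -> algC}) (k : nat).
Hypothesis Hk : forall i x, x \in G -> u ('chi[G]_i x) = 'chi_i (x ^+ k)%g.

Lemma tmapE i j : 'chi_i (gr j ^+ k)%g = 'chi[G]_i (gr (tmap k j)).
Proof. exact: cfun_gr _ _ (groupX k (gr_in j)). Qed.

Lemma tmapP i j : 'chi[G]_(aut_Iirr u i) (gr j) = 'chi_i (gr (tmap k j)).
Proof. by rewrite aut_IirrE cfunE Hk ?gr_in // tmapE. Qed.

Lemma tmap_inj : injective (tmap k).
Proof.
move=> j1 j2 e; apply: gr_eq => i; apply: (fmorph_inj u).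
by rewrite !Hk ?gr_in // !tmapE e.
Qed.

Lemma tmap_rat j : (forall i, 'chi[G]_i (gr j) \in Crat) -> tmap k j = j.
Proof.
move=> h; apply: gr_eq => i; by rewrite -tmapE -Hk ?gr_in // aut_Crat.
Qed.

End K.

Lemma brauer (s t : {perm Iirr G}) :
  (forall i j, 'chi_(s i) (gr j) = 'chi_i (gr (t j))) ->
  #|[set i | s i == i]| = #|[set j | t j == j]|.
Proof.
move=> h; have uX := character_table_unit G.
set X := character_table G in uX.
have E : perm_mx s *m X = X *m perm_mx (t^-1)%g.
  rewrite -row_permE -col_permE; apply/matrixP=> i j; rewrite !mxE.
  exact: h.
have trE (r : {perm Iirr G}) : \tr (perm_mx r : 'M[algC]_(Nirr G)) = #|[set i | r i == i]|%:R.
  rewrite -sumr_const big_mkcond /mxtrace; apply: eq_bigr => i _.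
  rewrite !mxE inE.
  by case: ifP.
have e1 : #|[set i | s i == i]|%:R = #|[set j | (t^-1)%g j == j]|%:R :> algC.
  rewrite -!trE.
  have -> : perm_mx s = X *m perm_mx (t^-1)%g *m invmx X by rewrite -E mulmxK.
  by rewrite -mulmxA mxtrace_mulC mulmxKV.
move/eqP: e1; rewrite eqr_nat => /eqP ->.
apply: eq_card => j; rewrite !inE.
by rewrite -(inj_eq (@perm_inj _ t)) permKV eq_sym.
Qed.

Definition Cset := [set j : Iirr G | irrational_class G (irr_class j)].

Lemma card_Cset : #|Cset| = num_irrational_classes G.
Proof.
rewrite /num_irrational_classes.
have -> : [set K in classes G | irrational_class G K] = irr_class @: Cset.
  apply/setP => K; rewrite inE.
  apply/andP/imsetP => [[cK iK] | [j]].
    by exists (class_Iirr G K); rewrite ?inE class_IirrK.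
  by rewrite inE => ij ->; rewrite irr_classP.
by rewrite card_imset //; apply: (can_inj (@irr_classK _ G)).
Qed.

Lemma rat_notC j : j \notin Cset -> forall i, 'chi[G]_i (gr j) \in Crat.
Proof. by rewrite inE => /existsPn h i; have := h i; rewrite negbK. Qed.

Lemma moved_bound (u : {rmorphism algC -> algC}) k
  (Hk : forall i x, x \in G -> u ('chi[G]_i x) = 'chi_i (x ^+ k)%g) :
  (#|[set i : Iirr G | aut_Iirr u i != i]| <= #|Cset|)%N.
Proof.
pose s := perm (@aut_Iirr_inj gT G u); pose t := perm (@tmap_inj u k Hk).
have b := @brauer s t.
have e : #|[set i : Iirr G | aut_Iirr u i != i]| = #|[set j | tmap k j != j]|.
  have e1 : forall (r : Iirr G -> Iirr G), #|[set i | r i != i]| = (#|Iirr G| - #|[set i | r i == i]|)%N.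
    move=> r; rewrite -(cardsC [set i | r i == i]) addKn; apply: eq_card => i.
    by rewrite !inE.
  rewrite !e1; congr (_ - _)%N.
  have -> : [set i : Iirr G | aut_Iirr u i == i] = [set i | s i == i].
    by apply/setP => i; rewrite !inE permE.
  have -> : [set i | tmap k i == i] = [set i | t i == i].
    by apply/setP => i; rewrite !inE permE.
  by apply: b => i j; rewrite !permE; apply: (@tmapP u k Hk).
rewrite e; apply: subset_leq_card; apply/subsetP => j; rewrite inE.
apply: contraR => /rat_notC h; apply/eqP; exact: (@tmap_rat u k Hk j h).
Qed.

End Gen.

Arguments tmap {gT G} k j.
Arguments tmapP {gT G u k} Hk i j.
Arguments tmap_inj {gT G u k} Hk [x1 x2].
Arguments tmap_rat {gT G u k} Hk [j].
Arguments rat_notC {gT G j}.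
Arguments moved_bound {gT G u k} Hk.
Arguments cf_eq_gr {gT G phi psi}.
Arguments Cset {gT} G.

Lemma card_bigcup_leq (I T : finType) (P : pred I) (A : I -> {set T}) :
  (#|\bigcup_(i | P i) A i| <= \sum_(i | P i) #|A i|)%N.
Proof.
elim/big_rec2: _ => [|i m B _ IH]; first by rewrite cards0.
by apply: leq_trans (leq_card_setU _ _) _; rewrite leq_add2l.
Qed.

Section Main.
Variables (gT : finGroupType) (G : {group gT}).

Lemma main_bound n : num_irrational_classes G = n ->
  (num_irrational_chars G <= n ^ n * n)%N /\
  forall i, Qdegree_le 'chi[G]_i (n ^ n * n).+1.
Proof.
move=> hn.
have [Qn galQn [QnC gQnC [w _ QnG]]] := group_num_field_exists G.
pose nuC (nu : gal_of (fullv : {vspace Qn})) := sval (gQnC nu).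
have nuCE (nu : gal_of (fullv : {vspace Qn})) (a : Qn) : QnC (nu a) = nuC nu (QnC a) := svalP (gQnC nu) a.
have [kf Hkf] : exists kf : gal_of (fullv : {vspace Qn}) -> nat,
    forall nu i x, x \in G -> nuC nu ('chi[G]_i x) = 'chi_i (x ^+ kf nu)%g.
  apply: (@fin_all_exists _ (fun _ => nat) (fun nu k => forall i x, x \in G -> nuC nu ('chi[G]_i x) = 'chi_i (x ^+ k)%g)) => nu; exact: KL.
have vals i x : exists a, QnC a = 'chi[G]_i x.
  case Gx: (x \in G).
    by have [a Da] := QnG _ G _ (irr_char i) x (order_dvdG Gx); exists a.
  by exists 0; rewrite rmorph0 cfun0 ?Gx.
pose I := [set i : Iirr G | irrational_char 'chi[G]_i].
pose Gal := 'Gal((fullv : {vspace Qn}) / 1)%g.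
pose phi nu i := @aut_Iirr gT G (nuC nu) i.
have phiE nu i x : 'chi_(phi nu i) x = nuC nu ('chi[G]_i x).
  by rewrite /phi aut_IirrE cfunE.
have R i : i \in I -> exists2 nu, nu \in Gal & phi nu i != i.
  rewrite inE => /exists_inP[x Gx nQ].
  have [a Da] := vals i x.
  case: (boolP [exists nu in Gal, phi nu i != i]) => [/exists_inP[nu ? ?]|/exists_inPn h].
    by exists nu.
  exfalso; move/negP: nQ; apply.
  have fa : a \in fixedField Gal.
    apply/fixedFieldP; first exact: memvf.
    move=> nu Gnu; apply: (fmorph_inj QnC); rewrite nuCE Da -phiE.
    by have := h nu Gnu; rewrite negbK => /eqP ->.
  have /galois_fixedField eF := galQn.
  rewrite -Da; move: fa; rewrite eF => /vlineP[r ->].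
  by rewrite rmorphZ_num rmorph1 mulr1 Crat_rat.
have cardI : (#|I| <= n ^ n * n)%N.
  pose tf nu : {ffun Iirr G -> Iirr G} := [ffun j => tmap (kf nu) j].
  pose Mv nu := [set i : Iirr G | phi nu i != i].
  have Mvn nu : (#|Mv nu| <= n)%N.
    by rewrite -hn -card_Cset; exact: (moved_bound (Hkf nu)).
  have phi_eq nu mu : tf nu = tf mu -> phi nu =1 phi mu.
    move=> e i; apply: irr_inj; apply: cf_eq_gr => j.
    rewrite (tmapP (Hkf nu)) (tmapP (Hkf mu)).
    by have := congr1 (fun f : {ffun Iirr G -> Iirr G} => f j) e; rewrite !ffunE => ->.
  pose T := [set tf nu | nu in Gal].
  pose rep f := odflt 1%g [pick nu in Gal | tf nu == f].
  have sub : I \subset \bigcup_(f in T) Mv (rep f).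
    apply/subsetP => i /R[nu Gnu mv]; apply/bigcupP; exists (tf nu).
      exact: imset_f.
    rewrite /rep; case: pickP => [mu /andP[_ /eqP e] | /(_ nu)]; last by rewrite Gnu eqxx.
    by rewrite /= inE (phi_eq _ _ e).
  have Tfix f : f \in T -> forall j, j \notin Cset G -> f j = j.
    case/imsetP => nu _ -> j jC; rewrite ffunE.
    exact: (tmap_rat (Hkf nu) (rat_notC jC)).
  have TC f : f \in T -> forall j, j \in Cset G -> f j \in Cset G.
    move=> fT j jC; apply: contraT => ntC.
    case/imsetP: fT => nu _ Df; move: ntC; rewrite Df ffunE => ntC.
    have := tmap_rat (Hkf nu) (rat_notC ntC) => /(tmap_inj (Hkf nu)) e.
    by move: ntC; rewrite e jC.
  have cardT : (#|T| <= n ^ n)%N.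
    pose res (f : {ffun Iirr G -> Iirr G}) : {ffun Iirr G -> Iirr G} :=
      [ffun j => if j \in Cset G then f j else 0].
    rewrite -(card_in_imset (f := res) (D := T)); last first.
      move=> f1 f2 f1T f2T e; apply/ffunP => j.
      case jC: (j \in Cset G).
        by have := congr1 (fun f : {ffun Iirr G -> Iirr G} => f j) e; rewrite !ffunE jC.
      by rewrite !Tfix ?jC.
    rewrite -hn -card_Cset -(card_pffun_on 0).
    apply: subset_leq_card; apply/subsetP => _ /imsetP[f fT ->].
    apply/pffun_onP; split.
      apply/subsetP => j; case jC: (j \in Cset G) => //.
      by rewrite inE ffunE jC eqxx.
    move=> _ /imageP[j jC ->]; rewrite ffunE jC; exact: TC.
  apply: (leq_trans (subset_leq_card sub)).
  apply: (leq_trans (@card_bigcup_leq _ _ (fun f => f \in T) (fun f => Mv (rep f)))).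
  have h2 : (\sum_(f in T) #|Mv (rep f)| <= \sum_(f in T) n)%N.
    by apply: leq_sum => f _; exact: Mvn.
  rewrite sum_nat_const in h2; apply: (leq_trans h2).
  by rewrite leq_mul2r cardT orbT.
split; first exact: cardI.
move=> i s hs hQ.
have [a Da] : exists a : gT -> Qn, forall x, QnC (a x) = 'chi[G]_i x.
  apply: (@fin_all_exists _ (fun _ => Qn) (fun x b => QnC b = 'chi[G]_i x)) => x.
  exact: vals.
pose A := [set nu : gal_of (fullv : {vspace Qn}) | [forall x, nu (a x) == a x]].
pose E := fixedField A.
have aE x : a x \in E.
  apply/fixedFieldP; first exact: memvf.
  by move=> nu; rewrite inE => /forallP /(_ x) /eqP.
have dimE : (\dim E <= (n ^ n * n).+1)%N.
  pose GE := 'Gal((fullv : {vspace Qn}) / E)%g.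
  have d1 := galois_dim (fixedField_galois A).
  have d2 := galois_dim galQn.
  rewrite dimv1 divn1 in d2.
  have d3 := dim_sup_field (subvf E).
  have cardGal : #|Gal| = (\dim E * #|GE|)%N by rewrite -d2 d3 d1 mulnC.
  pose Img := [set phi nu i | nu in Gal].
  have ImgI : (#|Img| <= (n ^ n * n).+1)%N.
    apply: (@leq_trans #|i |: I|); last by move: (cardsU1 i I) => ->; exact: (leq_add (leq_b1 _) cardI).
    apply: subset_leq_card; apply/subsetP => _ /imsetP[nu _ ->]; rewrite !inE.
    case: eqP => //= ne.
    case: (boolP (irrational_char _)) => // /exists_inPn h; exfalso; apply: ne.
    apply: irr_inj; apply/cfun_inP => x Gx; have := h x Gx; rewrite negbK => hr.
    have ri : 'chi_i x \in Crat by rewrite -(Crat_aut (nuC nu)) -phiE.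
    by rewrite phiE aut_Crat.
  have fib : (#|Gal| <= #|Img| * #|GE|)%N.
    rewrite -sum1_card (partition_big (fun nu => phi nu i) (mem Img)) /=; last first.
      by move=> nu Gnu; apply: imset_f.
    rewrite -sum_nat_const; apply: leq_sum => psi /imsetP[nu0 Gnu0 ->].
    rewrite sum1_card -(card_rcoset GE nu0); apply: subset_leq_card.
    apply/subsetP => mu /andP[Gmu /eqP e].
    rewrite mem_rcoset /GE gal_generated; apply: mem_gen; rewrite inE.
    apply/forallP => x; apply/eqP.
    rewrite galM ?memvf //.
    have -> : mu (a x) = nu0 (a x).
      by apply: (fmorph_inj QnC); rewrite !nuCE Da -!phiE e.
    by rewrite -galM ?memvf // mulgV gal_id.
  have : (\dim E * #|GE| <= (n ^ n * n).+1 * #|GE|)%N.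
    by rewrite -cardGal (leq_trans fib) // leq_mul2r ImgI orbT.
  by rewrite leq_pmul2r ?cardG_gt0.
set f := (n ^ n * n).+1 in dimE hs *.
pose S : {pred algC} := [pred y | pb (exists2 b, b \in E & QnC b = y)].
have Sdiv : GRing.divring_closed S.
  split.
  - by apply/pbP; exists 1; [exact: mem1v | exact: rmorph1].
  - move=> y z /pbP[b bE <-] /pbP[c cE <-]; apply/pbP.
    by exists (b - c); [exact: memvB | exact: rmorphB].
  - move=> y z /pbP[b bE <-] /pbP[c cE <-]; apply/pbP.
    by exists (b / c); [rewrite memvM ?memvV | exact: fmorph_div].
have Sval g : 'chi_i g \in S by apply/pbP; exists (a g).
have hb : forall j : 'I_f.+1, exists c, c \in E /\ QnC c = s`_j.
  move=> j; have : s`_j \in S.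
    by apply: (hQ _ (mem_nth 0 _) S Sdiv Sval); rewrite hs ltn_ord.
  by case/pbP => c cE Dc; exists c.
have [b Db] := fin_all_exists hb.
pose X := [tuple b j | j < f.+1].
have nfree : ~~ free X.
  rewrite /free size_tuple; apply/negP => /eqP e.
  have : (\dim <<X>> <= \dim E)%N.
    apply: dimvS; apply/span_subvP => v /tnthP[j ->].
    by rewrite tnth_mktuple; case: (Db j).
  by rewrite e leqNgt (leq_ltn_trans dimE).
have nall : ~ (forall k : 'I_f.+1 -> rat, \sum_(j < f.+1) k j *: X`_j = 0 -> forall j, k j = 0).
  by move/freeP; rewrite (negbTE nfree).
have [k [ksum [j0 kj0]]] : exists k : 'I_f.+1 -> rat,
    \sum_(j < f.+1) k j *: X`_j = 0 /\ exists j, k j != 0.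
  apply: NNPP => hn1; apply: nall => k ks j; apply: NNPP => kj.
  by apply: hn1; exists k; split => //; exists j; apply/eqP.
exists (mkseq (fun j => k (inord j)) f.+1); split.
- by rewrite size_mkseq.
- apply/(has_nthP 0); exists j0; first by rewrite size_mkseq.
  by rewrite nth_mkseq // inord_val.
- transitivity (QnC (\sum_(j < f.+1) k j *: X`_j)); last by rewrite ksum rmorph0.
  rewrite rmorph_sum; apply: eq_bigr => j _.
  by rewrite rmorphZ_num nth_mkseq // inord_val nth_mktuple; case: (Db j) => _ ->.
Qed.

End Main.

Theorem theoremC (n : nat) (hn : (0 < n)%N) :
  exists f : nat,
    forall (gT : finGroupType) (G : {group gT}),
      num_irrational_classes G = n ->
      (num_irrational_chars G <= f)%N /\
      (forall i : Iirr G, Qdegree_le 'chi[G]_i f).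
Proof.
exists (n ^ n * n).+1 => gT G hG.
have [h1 h2] := @main_bound gT G n hG.
by split => //; exact: leqW h1.
Qed.
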